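(* Let $\mathcal{C}_1$ be an $(n,k,d)$ binary linear code. Then the code $\mathcal{C}_2 = \{(u,u) : u \in \mathcal{C}_1\}$ is a $(2n,k,2d)$ code with $$\rho(\mathcal{C}_2) \le \rho(\mathcal{C}_1) + n.$$
   Context: An $(n,k,d)$ code is a linear code of length $n$, dimension $k$ and minimum Hamming distance $d$. A parity-check matrix for a linear code $\mathcal{C}$ is any matrix (possibly with linearly dependent rows) whose rows span $\mathcal{C}^\perp$. For a parity-check matrix $H$, the stopping distance $s(H)$ is the largest integer such that for every set of $s(H)-1$ or fewer columns of $H$, the projection of $H$ onto those columns contains at least one row of Hamming weight exactly one. The stopping redundancy $\rho(\mathcal{C})$ is the smallest number of rows of a parity-check matrix $H$ for $\mathcal{C}$ with $s(H) = d(\mathcal{C})$, the minimum distance of $\mathcal{C}$. *)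

(* Defs.v *)
From HB Require Import structures.
From mathcomp Require Import all_boot all_order all_algebra.
Set Implicit Arguments. Unset Strict Implicit. Unset Printing Implicit Defensive.
Import GRing.Theory.
Local Open Scope ring_scope.

Notation F2 := ('F_2)%type.

(* A binary linear code of length n is represented by a matrix whose row
   space is the code; membership of a word v is (v <= C)%MS. *)

Definition wt n (v : 'rV[F2]_n) : nat := #|[set j : 'I_n | v 0 j != 0]|.

Definition min_dist m n (C : 'M[F2]_(m, n)) (d : nat) : Prop :=
  (exists v : 'rV[F2]_n, (v <= C)%MS /\ v != 0 /\ wt v = d) /\
  (forall v : 'rV[F2]_n, (v <= C)%MS -> v != 0 -> (d <= wt v)%N).

Definition is_code m n k d (C : 'M[F2]_(m, n)) : Prop :=
  \rank C = k /\ min_dist C d.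

Definition dual_code m n (C : 'M[F2]_(m, n)) : 'M[F2]_n := kermx C^T.

(* H is a parity-check matrix for C: its rows (possibly dependent) span C^perp *)
Definition parity_check r m n (H : 'M[F2]_(r, n)) (C : 'M[F2]_(m, n)) : Prop :=
  (H == dual_code C)%MS.

Definition stop_ok r n (H : 'M[F2]_(r, n)) (s : nat) : Prop :=
  forall S : {set 'I_n}, S != set0 -> (#|S| < s)%N ->
    exists i : 'I_r, #|[set j in S | H i j != 0]| = 1%N.

Definition stop_dist r n (H : 'M[F2]_(r, n)) (s : nat) : Prop :=
  stop_ok H s /\ ~ stop_ok H s.+1.

Definition stopping_redundancy m n (C : 'M[F2]_(m, n)) (d : nat) (rho : nat) : Prop :=
  (exists H : 'M[F2]_(rho, n), parity_check H C /\ stop_dist H d) /\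
  (forall r : nat, (r < rho)%N ->
     ~ exists H : 'M[F2]_(r, n), parity_check H C /\ stop_dist H d).

(* Main.v *)
Require Import Defs.
From HB Require Import structures.
From mathcomp Require Import all_boot all_order all_algebra.
From Stdlib Require Import Classical.
Import GRing.Theory.
Local Open Scope ring_scope.

Lemma F2cases (x : F2) : x = 0 \/ x = 1.
Proof. case: x => [[|[|m]]] // Hm; [left|right]; exact/val_inj. Qed.

Lemma F2dbl (x : F2) : x + x = 0.
Proof. by case: (F2cases x) => ->; apply/val_inj. Qed.

Lemma mxdbl m n (A : 'M[F2]_(m, n)) : A + A = 0.
Proof. by apply/matrixP => i j; rewrite !mxE F2dbl. Qed.

Lemma F2mul (x y : F2) : x * y = ((x != 0) && (y != 0))%:R.
Proof. by case: (F2cases x) => ->; case: (F2cases y) => ->; apply/val_inj. Qed.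

Lemma kerP m n (C : 'M[F2]_(m,n)) (v : 'rV[F2]_n) :
  (v <= kermx C^T)%MS <-> forall w : 'rV_n, (w <= C)%MS -> v *m w^T = 0.
Proof.
rewrite sub_kermx; split.
- move/eqP=> H w /submxP [x ->]. by rewrite trmx_mul mulmxA H mul0mx.
- move=> H; apply/eqP/rowP => j. have := H (row j C) (row_sub j C).
  move/matrixP/(_ 0 0) => E; rewrite !mxE in E; rewrite !mxE -[RHS]E.
  by apply: eq_bigr => k _; rewrite !mxE.
Qed.

Lemma card_split n (S : {set 'I_(n+n)}) :
  #|S| = (#|[set j : 'I_n | lshift n j \in S]| + #|[set j : 'I_n | rshift n j \in S]|)%N.
Proof.
rewrite -!sum1_card big_split_ord /=.
by congr (_ + _)%N; apply: eq_bigl => j; rewrite inE.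
Qed.

Lemma wt_dup n (u : 'rV[F2]_n) : wt (row_mx u u) = (2 * wt u)%N.
Proof.
rewrite /wt card_split.
have -> : [set j : 'I_n | lshift n j \in [set j0 | row_mx u u 0 j0 != 0]] = [set j | u 0 j != 0].
  by apply/setP => j; rewrite !inE row_mxEl.
have -> : [set j : 'I_n | rshift n j \in [set j0 | row_mx u u 0 j0 != 0]] = [set j | u 0 j != 0].
  by apply/setP => j; rewrite !inE row_mxEr.
by rewrite mul2n addnn.
Qed.

Lemma min_ex (P : nat -> Prop) N : P N ->
  exists r, [/\ P r, (forall r', (r' < r)%N -> ~ P r') & (r <= N)%N].
Proof.
elim: N {-2}N (leqnn N) => [|N IH] m Hm Pm.
  move: Hm; rewrite leqn0 => /eqP Hm; subst m; exists 0%N; split => //.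
case: (classic (exists r', (r' < m)%N /\ P r')) => [[r' [Hr' Pr']]|Hno].
  have Hr'N : (r' <= N)%N by rewrite -ltnS (leq_trans Hr' Hm).
  have [r [Pr Hmin Hr]] := IH r' Hr'N Pr'.
  by exists r; split => //; apply: leq_trans Hr (ltnW Hr').
exists m; split => // r' Hr' Pr'; apply: Hno; by exists r'.
Qed.

Lemma F2nat (b : bool) : ((b%:R : F2) != 0) = b.
Proof. by case: b; rewrite ?oner_eq0 ?eqxx. Qed.

Lemma card_in1 n (A : {set 'I_n}) j : #|[set k in A | k == j]| = (j \in A).
Proof.
case: (boolP (j \in A)) => h.
  have -> : [set k in A | k == j] = [set j].
    by apply/setP => k; rewrite !inE; case: (eqVneq k j) => [->|_]; rewrite ?h ?andbF.
  by rewrite cards1.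
have -> : [set k in A | k == j] = set0.
  by apply/setP => k; rewrite !inE; case: (eqVneq k j) => [->|_]; rewrite ?(negbTE h) ?andbF.
by rewrite cards0.
Qed.

Section Main.
Variables (n k d m1 m2 : nat) (C1 : 'M[F2]_(m1, n)) (C2 : 'M[F2]_(m2, n + n)).
Hypothesis hC2 : forall w : 'rV[F2]_(n + n),
      (w <= C2)%MS <-> exists u : 'rV[F2]_n, (u <= C1)%MS /\ w = row_mx u u.

Lemma dual2 (a b : 'rV[F2]_n) :
  (row_mx a b <= kermx C2^T)%MS <-> ((a + b)%R <= kermx C1^T)%MS.
Proof.
split.
- move/kerP => H; apply/kerP => u Hu.
  have := H (row_mx u u) (proj2 (hC2 _) (ex_intro _ u (conj Hu erefl))).
  by rewrite tr_row_mx mul_row_col mulmxDl.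
- move/kerP => H; apply/kerP => w /hC2 [u [Hu ->]]; rewrite tr_row_mx mul_row_col -mulmxDl; exact: H.
Qed.

Lemma rank2 : \rank C2 = \rank C1.
Proof.
pose M := row_mx (1%:M : 'M[F2]_n) 1%:M.
have eq : (C2 == C1 *m M)%MS.
  apply/andP; split.
  - apply/row_subP => i. have [u [Hu E]] := proj1 (hC2 (row i C2)) (row_sub i C2).
    rewrite E. have -> : row_mx u u = u *m M by rewrite mul_mx_row mulmx1.
    exact: submxMr.
  - apply/row_subP => i. rewrite row_mul mul_mx_row mulmx1.
    apply/hC2; exists (row i C1); split => //; exact: row_sub.
rewrite (eqmx_rank eq) mxrankMfree //.
rewrite /row_free eqn_leq rank_leq_row /=.
apply: (leq_trans _ (mxrankM_maxl M (col_mx (1%:M : 'M[F2]_n) (0 : 'M_(n,n))))).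
by rewrite mul_row_col mulmx0 addr0 mulmx1 mxrank1.
Qed.

End Main.

Theorem theorem8 (n k d m1 m2 : nat) (C1 : 'M[F2]_(m1, n)) (C2 : 'M[F2]_(m2, n + n)) :
  is_code k d C1 ->
  (forall w : 'rV[F2]_(n + n),
      (w <= C2)%MS <-> exists u : 'rV[F2]_n, (u <= C1)%MS /\ w = row_mx u u) ->
  is_code k (2 * d) C2 /\
  (forall rho1 : nat, stopping_redundancy C1 d rho1 ->
     exists rho2 : nat, stopping_redundancy C2 (2 * d) rho2 /\ (rho2 <= rho1 + n)%N).
Proof.
move=> [hrk [[u0 [Hu0 [Hu0nz Hwt0]]] hmin]] hC2.
split.
  split; first by rewrite (@rank2 _ _ _ C1 C2 hC2).
  split.
    exists (row_mx u0 u0); split; first by apply/hC2; exists u0.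
    split; last by rewrite wt_dup Hwt0.
    by apply: contra Hu0nz; rewrite -row_mx0 => /eqP/eq_row_mx [-> _].
  move=> v /hC2 [u [Hu ->]] Hnz; rewrite wt_dup leq_mul2l hmin //.
  by apply: contra Hnz => /eqP ->; rewrite row_mx0.
move=> rho1 [[H1 [PH1 [SH1 _]]] _].
pose H2 := col_mx (row_mx H1 0) (row_mx (1%:M : 'M[F2]_n) 1%:M).
have PH2 : parity_check H2 C2.
  case/andP: PH1 => PH1a PH1b.
  apply/andP; split.
    rewrite col_mx_sub; apply/andP; split; apply/row_subP => i; rewrite row_row_mx; apply/(@dual2 _ _ _ C1 C2 hC2 _ _).
      rewrite row0 addr0; exact: submx_trans (row_sub i H1) PH1a.
    by rewrite mxdbl sub0mx.
  apply/row_subP => i.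
  have Hv : (row i (kermx C2^T) <= kermx C2^T)%MS by exact: row_sub.
  rewrite -(hsubmxK (row i (kermx C2^T))) in Hv *.
  move: Hv; set a := lsubmx _; set b := rsubmx _.
  move/(@dual2 _ _ _ C1 C2 hC2 _ _) => Hab.
  have := submx_trans Hab PH1b; case/submxP => x Ex.
  have -> : row_mx a b = row_mx (x *m H1) (0 : 'M[F2]_(1, n)) + row_mx b b.
    by rewrite add_row_mx add0r -Ex -addrA mxdbl addr0.
  have := submx_refl H2; rewrite col_mx_sub => /andP [HL HR].
  apply: addmx_sub.
    have -> : row_mx (x *m H1) (0 : 'M[F2]_(1, n)) = x *m row_mx H1 (0 : 'M[F2]_(rho1, n)).
      by rewrite mul_mx_row mulmx0.
    exact: submx_trans (submxMl _ _) HL.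
  have -> : row_mx b b = b *m row_mx 1%:M 1%:M by rewrite mul_mx_row mulmx1.
  exact: submx_trans (submxMl _ _) HR.
have SH2 : stop_dist H2 (2 * d).
  split.
    move=> S HS0 HS.
    pose A := [set j : 'I_n | lshift n j \in S].
    pose B := [set j : 'I_n | rshift n j \in S].
    have ES : #|S| = (#|A| + #|B|)%N by exact: card_split.
    case: (eqVneq A B) => [EAB | NAB].
      have EB : #|B| = #|A| := f_equal (fun X : {set 'I_n} => #|X|) (esym EAB).
      rewrite EB (addnn #|A|) in ES.
      have HA0 : A != set0.
        by rewrite -card_gt0 -double_gt0 -ES card_gt0.
      have HAd : (#|A| < d)%N.
        by rewrite -(ltn_pmul2l (isT : (0 < 2)%N)) mul2n -ES.
      have [i Hi] := SH1 A HA0 HAd.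
      exists (lshift n i); rewrite card_split.
      have -> : [set j : 'I_n | lshift n j \in [set c in S | H2 (lshift n i) c != 0]]
             = [set j in A | H1 i j != 0].
        by apply/setP => j; rewrite !inE col_mxEu row_mxEl.
      have -> : [set j : 'I_n | rshift n j \in [set c in S | H2 (lshift n i) c != 0]]
             = set0.
        by apply/setP => j; rewrite !inE col_mxEu row_mxEr mxE eqxx andbF.
      by rewrite Hi cards0.
    have [j Hj] : exists j, (j \in A) != (j \in B).
      apply/existsP; apply: contraNT NAB => /existsPn H; apply/eqP/setP => j.
      by have := H j; rewrite negbK => /eqP.
    exists (rshift rho1 j); rewrite card_split.
    have -> : [set q : 'I_n | lshift n q \in [set c in S | H2 (rshift rho1 j) c != 0]]
           = [set q in A | q == j].
      by apply/setP => q; rewrite !inE col_mxEd row_mxEl mxE F2nat eq_sym.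
    have -> : [set q : 'I_n | rshift n q \in [set c in S | H2 (rshift rho1 j) c != 0]]
           = [set q in B | q == j].
      by apply/setP => q; rewrite !inE col_mxEd row_mxEr mxE F2nat eq_sym.
    rewrite !card_in1.
    by move: Hj; case: (j \in A); case: (j \in B).
  move=> Hst.
  pose w := row_mx u0 u0.
  have Hw : (w <= C2)%MS by apply/hC2; exists u0.
  pose S := [set c | w 0 c != 0].
  have ES : #|S| = (2 * d)%N by rewrite -Hwt0 -wt_dup.

  have Hd : (0 < d)%N.
    rewrite -Hwt0 /wt card_gt0; apply: contraNneq Hu0nz => E.
    apply/eqP/rowP => j; rewrite mxE.
    by move: (in_set0 j); rewrite -E inE => /negbT; rewrite negbK => /eqP.
  have HS0 : S != set0 by rewrite -card_gt0 ES muln_gt0 Hd.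
  have HS : (#|S| < (2 * d).+1)%N by rewrite ES.
  have [i Hi] := Hst S HS0 HS.
  case/andP: PH2 => PH2a _.
  have := submx_trans (row_sub i H2) PH2a.
  move/kerP => /(_ w Hw) /matrixP /(_ 0 0).
  rewrite !mxE.
  set T := #|_| in Hi.
  have -> : \sum_j row i H2 0 j * w^T j 0 = T%:R.
    rewrite /T -sum1_card natr_sum [RHS]big_mkcond /=.
    apply: eq_bigr => c _; rewrite [row i H2 0 c]mxE [w^T c 0]mxE F2mul !inE andbC.
    by case: (_ && _).
  by rewrite Hi; apply/eqP; exact: oner_neq0.
have [r [Pr Hmin Hr]] := @min_ex (fun r => exists H : 'M[F2]_(r, n + n), parity_check H C2 /\ stop_dist H (2 * d)) (rho1 + n)%N (ex_intro _ H2 (conj PH2 SH2)).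
exists r; split => //; split => //.
Qed.
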